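(* Let $G$ and $H$ be connected graphs of orders $m$ and $n\geq 2$, respectively, with $\mathrm{ldim}_f(H)=\frac{n}{2}$. Then $\mathrm{ldim}_f(G\square H)\geq \frac{n}{2}$.
   Context: All graphs are finite, simple and connected; $d$ is the shortest-path distance. For an edge $uv$ of a graph $X$, $L_X(uv)=\{x\in V(X): d_X(u,x)\neq d_X(v,x)\}$. A function $f:V(X)\to[0,1]$ is a local resolving function of $X$ if $\sum_{x\in L_X(uv)}f(x)\geq 1$ for every edge $uv$; $\mathrm{ldim}_f(X)$ is the minimum of $\sum_{v}f(v)$ over all local resolving functions. The Cartesian product $G\square H$ has vertex set $V(G)\times V(H)$, with $(u_1,v_1)$ adjacent to $(u_2,v_2)$ iff ($u_1u_2\in E(G)$ and $v_1=v_2$) or ($u_1=u_2$ and $v_1v_2\in E(H)$). *)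

(* Defs.v *)
From HB Require Import structures.
From mathcomp Require Import all_boot all_order all_algebra.
Set Implicit Arguments. Unset Strict Implicit. Unset Printing Implicit Defensive.
Import Order.TTheory GRing.Theory Num.Theory.

Definition simple_graph (T : finType) (e : rel T) : Prop :=
  symmetric e /\ irreflexive e.

Definition connected_graph (T : finType) (e : rel T) : Prop :=
  forall x y : T, connect e x y.

Definition walk_of_len (T : finType) (e : rel T) (x y : T) (k : nat) : bool :=
  [exists p : k.-tuple T, path e x p && (last x p == y)].

(* shortest-path distance: least k (< #|T|) with a walk of length k from x to y
   (for connected graphs a shortest path has length < #|T|) *)
Definition dist (T : finType) (e : rel T) (x y : T) : nat :=
  find (walk_of_len e x y) (iota 0 #|T|).

Definition resolving_set (T : finType) (e : rel T) (u v : T) : pred T :=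
  [pred x | dist e u x != dist e v x].

Definition local_resolving_fun (R : realFieldType) (T : finType) (e : rel T)
    (f : T -> R) : Prop :=
  (forall x, 0 <= f x <= 1)%R /\
  (forall u v, e u v -> (1 <= \sum_(x in resolving_set e u v) f x)%R).

Definition is_ldimf (R : realFieldType) (T : finType) (e : rel T) (r : R) : Prop :=
  (exists f : T -> R, local_resolving_fun e f /\ (\sum_x f x)%R = r) /\
  (forall f : T -> R, local_resolving_fun e f -> (r <= \sum_x f x)%R).

Definition cart_prod (T1 T2 : finType) (e1 : rel T1) (e2 : rel T2) : rel (T1 * T2) :=
  fun p q => (e1 p.1 q.1 && (p.2 == q.2)) || ((p.1 == q.1) && e2 p.2 q.2).

(* Main.v *)
Require Import Defs.
From HB Require Import structures.
From mathcomp Require Import all_boot all_order all_algebra.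
From mathcomp Require Import zify.
Import Order.TTheory GRing.Theory Num.Theory.
Set Implicit Arguments. Unset Strict Implicit.

Inductive W (T : Type) (e : rel T) : T -> T -> nat -> Prop :=
| W0 x : W e x x 0
| WS x z y k : e x z -> W e z y k -> W e x y k.+1.

Lemma walkP (T : finType) (e : rel T) x y k : walk_of_len e x y k <-> W e x y k.
Proof.
split.
- move=> /existsP [p /andP [pp /eqP lp]].
  case: p pp lp => s /= /eqP <-.
  elim: s x => [|z s IH] x /=; first by move=> _ ->; constructor.
  by move=> /andP [exz ps] ly; apply: WS exz (IH _ ps ly).
- elim=> {x y k} [x|x z y k exz _ /existsP [p /andP [pp lp]]]; apply/existsP.
  + by exists [tuple]; rewrite /= eqxx.
  + by exists [tuple of z :: p]; rewrite /= exz pp.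
Qed.

Lemma find_iota (P : pred nat) N k : (k < N)%N -> P k ->
  P (find P (iota 0 N)) /\ (forall j, P j -> find P (iota 0 N) <= j)%N.
Proof.
move=> kN Pk.
have hs : has P (iota 0 N) by apply/hasP; exists k => //; rewrite mem_iota.
have fs : (find P (iota 0 N) < N)%N by rewrite -[X in (_ < X)%N](size_iota 0 N) -has_find.
split.
- by have := nth_find 0 hs; rewrite nth_iota.
- move=> j Pj; rewrite leqNgt; apply/negP => jl.
  have := before_find 0 jl; rewrite nth_iota ?Pj //; lia.
Qed.

Lemma dist_char (T : finType) (e : rel T) x y k : (k < #|T|)%N -> W e x y k ->
  (forall j, W e x y j -> k <= j)%N -> dist e x y = k.
Proof.
move=> kN Wk mk.
have [P1 P2] := find_iota (P := walk_of_len e x y) kN (proj2 (walkP e x y k) Wk).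
rewrite /dist; apply/eqP; rewrite eqn_leq P2 ?(proj2 (walkP _ _ _ _) Wk) //.
exact/mk/walkP.
Qed.

Lemma conn_walk (T : finType) (e : rel T) x y : connect e x y ->
  exists k, (k < #|T|)%N /\ W e x y k.
Proof.
move=> /connectP [p pp ->].
case: (shortenP pp) => p' pp' up' _.
exists (size p'); split.
- have := max_card (mem (x :: p')); move/card_uniqP: up' => -> /=; lia.
- elim: p' x pp' {up' pp} => [|z s IH] x /=; first by constructor.
  by move=> /andP [exz ps]; apply: WS exz (IH _ ps).
Qed.

Lemma dist_min (T : finType) (e : rel T) x y : connect e x y ->
  (dist e x y < #|T|)%N /\ W e x y (dist e x y) /\ (forall j, W e x y j -> dist e x y <= j)%N.
Proof.
move=> /conn_walk [k [kN Wk]].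
have [P1 P2] := find_iota (P := walk_of_len e x y) kN (proj2 (walkP e x y k) Wk).
have fs : (dist e x y <= k)%N by apply: P2; apply/walkP.
split; first lia.
split; first exact/walkP.
move=> j Wj; apply: P2; exact/walkP.
Qed.
Section Prod.
Variables (TG TH : finType) (eG : rel TG) (eH : rel TH).
Let P := cart_prod eG eH.

Lemma WH_lift g h y b : W eH h y b -> W P (g, h) (g, y) b.
Proof.
elim=> {h y b} [h|h z y k ehz _ IH]; first by constructor.
by apply: WS IH; rewrite /P /cart_prod /= eqxx ehz orbT.
Qed.

Lemma W_pair g x a h y b : W eG g x a -> W eH h y b -> W P (g, h) (x, y) (a + b).
Proof.
move=> WG WHy; elim: WG => {g x a} [g|g z x k egz _ IH]; first exact: WH_lift.
by rewrite addSn; apply: WS IH; rewrite /P /cart_prod /= egz eqxx.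
Qed.

Lemma W_proj p q k : W P p q k -> exists a b, k = a + b /\ W eG p.1 q.1 a /\ W eH p.2 q.2 b.
Proof.
elim=> {p q k} [p|p z q k epz _ [a [b [-> [Wa Wb]]]]].
  by exists 0, 0; split=> //; split; constructor.
move: epz; rewrite /P /cart_prod => /orP [/andP [e1 /eqP e2]|/andP [/eqP e1 e2]].
- exists a.+1, b; split; first lia.
  by split; [apply: WS e1 Wa | rewrite e2].
- exists a, b.+1; split; first lia.
  by split; [rewrite e1 | apply: WS e2 Wb].
Qed.

Lemma dist_prod g h x y : connected_graph eG -> connected_graph eH ->
  dist P (g, h) (x, y) = dist eG g x + dist eH h y.
Proof.
move=> cG cH.
have [dG [WG mG]] := dist_min (cG g x).
have [dH [WH mH]] := dist_min (cH h y).
apply: dist_char.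
- rewrite card_prod; nia.
- exact: W_pair.
- move=> j /W_proj [a [b [-> [Wa Wb]]]].
  have := mG _ Wa; have := mH _ Wb; simpl; lia.
Qed.

End Prod.

Lemma sub_sum (R : realFieldType) (T : finType) (A B : pred T) (f : T -> R) :
  (forall x, 0 <= f x)%R -> (forall x, A x -> B x) ->
  (\sum_(x | A x) f x <= \sum_(x | B x) f x)%R.
Proof.
move=> f0 AB; rewrite [X in (X <= _)%R]big_mkcond [X in (_ <= X)%R]big_mkcond /=.
apply: ler_sum => x _; case: ifP => Ax; first by rewrite AB.
by case: ifP.
Qed.

Local Open Scope ring_scope.
Theorem theorem3p11 (R : realFieldType) (TG TH : finType)
    (eG : rel TG) (eH : rel TH)
    (sG : simple_graph eG) (cG : connected_graph eG) (neG : (0 < #|TG|)%N)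
    (sH : simple_graph eH) (cH : connected_graph eH) (n2 : (2 <= #|TH|)%N)
    (hH : is_ldimf eH ((#|TH|%:R / 2%:R) : R)) :
  forall f : TG * TH -> R, local_resolving_fun (cart_prod eG eH) f ->
    ((#|TH|%:R / 2%:R) <= \sum_p f p)%R.
Proof.
move=> f [f01 fres].
have f0 : forall p, (0 <= f p)%R by move=> p; case/andP: (f01 p).
have [g0 _] : exists g0 : TG, true.
  by move/card_gt0P: neG => [g _]; exists g.
pose S y := (\sum_a f (a, y))%R.
pose F y := Num.min 1 (S y).
have S0 y : (0 <= S y)%R by apply: sumr_ge0.
have FS y : (F y <= S y)%R by rewrite /F ge_min lexx orbT.
have F1 y : (F y <= 1)%R by rewrite /F ge_min lexx.
have F0 y : (0 <= F y)%R by rewrite /F le_min ler01 S0.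
have Fres : local_resolving_fun eH F.
  split; first by move=> x; rewrite F0 F1.
  move=> h h' ehh'.
  set L := resolving_set eH h h'.
  case: (boolP [exists y, (y \in L) && (1 <= S y)%R]).
    move=> /existsP [y /andP [yL Sy]].
    rewrite (bigD1 y) //= {1}/F (min_l Sy).
    by rewrite lerDl sumr_ge0.
  rewrite negb_exists => /forallP nS.
  have e1 : (\sum_(y in L) F y = \sum_(y in L) S y)%R.
    apply: eq_bigr => y yL; rewrite /F min_r //.
    by have := nS y; rewrite yL /= -ltNge => /ltW.
  rewrite e1 /S exchange_big /= pair_big_dep /=.
  have ep : cart_prod eG eH (g0, h) (g0, h') by rewrite /cart_prod /= eqxx ehh' orbT.
  apply: (le_trans (fres _ _ ep)).
  have hs : forall p : TG * TH, p \in resolving_set (cart_prod eG eH) (g0, h) (g0, h') -> true && (p.2 \in L).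
    move=> [a y] /=; rewrite /resolving_set !inE !dist_prod //.
    by apply: contra => /eqP ->.
  apply: le_trans (sub_sum f0 hs) _.
  by apply: ler_sum => -[a y] _.
apply: (le_trans (proj2 hH F Fres)).
apply: (le_trans (ler_sum _ (fun y _ => FS y))).
rewrite /S exchange_big /= pair_big /=.
by apply: ler_sum => -[a y] _.
Qed.
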